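(* Let $A$ and $A+\sum_{i=1}^r\mathbf{x}_i\mathbf{x}_i^{\top}$ both lie in $\mathrm{SGL}_n(\mathbb{F}_2)$, where $\mathbf{x}_1,\ldots,\mathbf{x}_r\in\mathbb{F}_2^n$ are linearly independent and $\mathbf{x}_i^{\top}A^{-1}\mathbf{x}_i=1$ for all $i$. Then $d\big(A,A+\sum_{i=1}^r\mathbf{x}_i\mathbf{x}_i^{\top}\big)\ge r+1$.
   Context: $\mathrm{SGL}_n(\mathbb{F}_2)$ is the set of invertible symmetric $n\times n$ matrices over the binary field; $d$ is the graph distance in the graph $\Gamma_n$ on $\mathrm{SGL}_n(\mathbb{F}_2)$ where $A\sim B$ iff $\mathrm{rank}(A-B)=1$. *)

(* Defs.v *)
From mathcomp Require Import all_boot all_order all_algebra.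
Set Implicit Arguments. Unset Strict Implicit. Unset Printing Implicit Defensive.
Import GRing.Theory.
Local Open Scope ring_scope.

Definition SGL (n : nat) (A : 'M['F_2]_n) : bool :=
  (A^T == A) && (A \in unitmx).

Definition Gamma_adj (n : nat) : rel 'M['F_2]_n :=
  fun A B => [&& SGL A, SGL B & \rank (A - B) == 1%N].

(* d(A,B) >= k in Gamma_n: every walk A = A_0 ~ A_1 ~ ... ~ A_m = B in Gamma_n
   has length m >= k (with d = +infinity when no walk exists). A walk is the
   sequence s = [A_1; ...; A_m] with path Gamma_adj A s and last A s = B. *)
Definition dist_geq (n : nat) (A B : 'M['F_2]_n) (k : nat) : Prop :=
  forall s : seq 'M['F_2]_n, path (@Gamma_adj n) A s -> last A s = B -> (k <= size s)%N.

(* Main.v *)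
Require Import Defs.
From mathcomp Require Import all_boot all_order all_algebra.
Import GRing.Theory.
Local Open Scope ring_scope.

Lemma F2_cases (a : 'F_2) : a = 0 \/ a = 1.
Proof. by case: a => [[|[|k]] H] //; [left|right]; apply/val_inj. Qed.

Lemma F2_add_self (a : 'F_2) : a + a = 0.
Proof. by case: (F2_cases a) => ->; [rewrite addr0|apply/val_inj]. Qed.

Lemma F2_nz1 (a : 'F_2) : a != 0 -> a = 1.
Proof. by case: (F2_cases a) => ->; rewrite ?eqxx. Qed.

Lemma mx_add_self m k (M : 'M['F_2]_(m,k)) : M + M = 0.
Proof. by apply/matrixP => i j; rewrite !mxE F2_add_self. Qed.

Lemma trD m k (c d : 'M['F_2]_(m,k)) : (c + d)^T = c^T + d^T.
Proof. by apply/matrixP => i j; rewrite !mxE. Qed.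
Lemma trB m k (c d : 'M['F_2]_(m,k)) : (c - d)^T = c^T - d^T.
Proof. by apply/matrixP => i j; rewrite !mxE. Qed.
Lemma trZ m k a (c : 'M['F_2]_(m,k)) : (a *: c)^T = a *: c^T.
Proof. by apply/matrixP => i j; rewrite !mxE. Qed.
Lemma t11 (c : 'M['F_2]_1) : c^T = c.
Proof. by apply/matrixP => i j; rewrite !ord1 !mxE. Qed.

Lemma zero_diag (k : nat) (N : 'M['F_2]_k) : N^T = N -> (forall i, N i i = 0) ->
  forall v : 'rV_k, v *m N *m v^T = 0.
Proof.
move=> sN dN v.
pose q (w : 'rV_k) := w *m N *m w^T.
have qD a b : q (a + b) = q a + q b.
  have E : b *m N *m a^T = a *m N *m b^T.
    by rewrite -[LHS]t11 !trmx_mul trmxK sN mulmxA.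
  rewrite /q trD !mulmxDl !mulmxDr E.
  by rewrite -addrA (addrA (a *m N *m b^T)) mx_add_self add0r.
have q0 : q 0 = 0 by rewrite /q !mul0mx.
rewrite -/(q v) (row_sum_delta v) (big_morph q qD q0) big1 // => i _.
rewrite /q trZ -!scalemxAl -scalemxAr.
suff -> : (delta_mx 0 i : 'rV['F_2]_k) *m N *m (delta_mx 0 i : 'rV['F_2]_k)^T = 0 by rewrite !scaler0.
apply/matrixP => a b; rewrite -rowE !mxE (bigD1 i) //= big1 ?addr0.
  by rewrite !mxE dN mul0r.
by move=> j /negbTE ji; rewrite !mxE ji andbF mulr0.
Qed.

Lemma path_rank n (A C : 'M['F_2]_n) s : path (@Gamma_adj n) A s -> last A s = C ->
  (\rank (C - A)%R <= size s)%N.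
Proof.
elim: s A => [|a s IH] A /=.
  by move=> _ ->; rewrite subrr mxrank0.
move=> /andP[hA hp] hl.
have := IH a hp hl; move: hA => /and3P[_ _ /eqP h1] h2.
rewrite (_ : C - A = (C - a) + (a - A)); last by rewrite addrA subrK.
apply: leq_trans (mxrank_add _ _) _.
by rewrite -(mxrank_opp (a - A)) opprB h1 addn1 ltnS.
Qed.

Lemma rank1_sym n (M : 'M['F_2]_n) : M^T = M -> \rank M = 1%N ->
  exists y : 'rV_n, M = y^T *m y.
Proof.
move=> sM rM.
have : M != 0 by apply/eqP => M0; move: rM; rewrite M0 mxrank0.
case/matrix0Pn => i [j Mij].
have := mulmx_base M; move: (col_base M) (row_base M); rewrite rM => C R eM.
have entry k l : M k l = C k 0 * R 0 l by rewrite -eM mxE big_ord1.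
have Mji : M j i != 0 by move: Mij; rewrite -{1}sM mxE.
move: Mij Mji; rewrite !entry !mulf_eq0 !negb_or => /andP[Ci _] /andP[_ Ri].
move: Ci Ri => /F2_nz1 Ci /F2_nz1 Ri.
exists R; apply/matrixP => k l; rewrite entry !mxE big_ord1 !mxE.
congr (_ * _).
have := congr1 (fun N : 'M['F_2]_n => N k i) sM; rewrite mxE !entry Ci Ri mulr1 mul1r.
by move=> ->.
Qed.

Theorem lemma4p6 (n r : nat) (A : 'M['F_2]_n) (x : 'I_r -> 'cV['F_2]_n) :
  (0 < r)%N ->
  SGL A ->
  SGL (A + \sum_(i < r) x i *m (x i)^T) ->
  row_free (\matrix_(i < r) (x i)^T) ->
  (forall i : 'I_r, (x i)^T *m invmx A *m x i = 1%:M) ->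
  dist_geq A (A + \sum_(i < r) x i *m (x i)^T) r.+1.
Proof.
move=> r0 sA sB fr hq s hp hl.
rewrite ltnNge; apply/negP => hs.
set D := \sum_(i < r) x i *m (x i)^T in sB hl.
set B := A + D in sB hl.
set Xr := \matrix_(i < r) (x i)^T in fr.
have eD : B - A = D by rewrite /B addrC addKr.
have eX : D = Xr^T *m Xr.
  apply/matrixP => a b; rewrite summxE !mxE; apply: eq_bigr => i _.
  by rewrite !mxE big_ord1 !mxE.
have rD : \rank D = r by rewrite eX mxrankMfree // mxrank_tr; exact/eqP.
move: sA sB => /andP[/eqP tA uA] /andP[/eqP tB uB].
case: s hp hl hs => [|a1 s'] /=.
  move=> _ hl _; move: rD; rewrite -eD -hl subrr mxrank0 => h.
  by rewrite -h in r0.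
move=> /andP[ha hp] hl hs.
have rE := @path_rank _ _ _ _ hp hl.
move: ha => /and3P[_ /andP[/eqP ta1 ua1] /eqP r1].
have [y ey] : exists y : 'rV_n, a1 - A = y^T *m y.
  apply: rank1_sym; first by rewrite trB ta1 tA.
  by rewrite -mxrank_opp opprB.
set E := B - a1 in rE.
have eDE : D = y^T *m y + E by rewrite -ey /E addrC addrA subrK eD.
case: (boolP (y <= E)%MS) => hyE.
  have : (D <= E)%MS.
    by rewrite eDE addmx_sub // (submx_trans (submxMl _ _) hyE).
  move/mxrankS; rewrite rD => h.
  have := leq_trans h rE; by rewrite leqNgt hs.
have tE : E^T = E by rewrite /E trB ta1 tB.
rewrite submxE in hyE.
have [j yj] : exists j, (y *m cokermx E) 0 j != 0.
  case/matrix0Pn: hyE => a [j h]; exists j; by rewrite ord1 in h.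
set u := (col j (cokermx E))^T.
have huE : u *m E = 0.
  apply: (can_inj (@trmxK _ _ _)); rewrite trmx_mul /u trmxK tE colE mulmxA mulmx_coker mul0mx.
  by apply/matrixP => a b; rewrite !mxE.
have huy : u *m y^T = 1%:M.
  rewrite /u -trmx_mul colE mulmxA.
rewrite t11 -colE.
  have e1 : (col j (y *m cokermx E)) 0 0 = 1 by rewrite mxE; exact: F2_nz1.
  by apply/matrixP => a b; rewrite !ord1 e1 mxE.
have huD : u *m D = y by rewrite eDE mulmxDr huE addr0 mulmxA huy mul1mx.
set g := u *m Xr^T.
have hy : y = g *m Xr by rewrite -huD eX /g mulmxA.
have hgg : g *m g^T = 1%:M.
  rewrite /g trmx_mul trmxK -mulmxA (mulmxA Xr^T) -eX mulmxA huD.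
  by rewrite -[LHS]trmxK trmx_mul trmxK huy tr_scalar_mx.
set S := invmx A.
have tS : S^T = S by rewrite /S trmx_inv tA.
set MM := Xr *m S *m Xr^T.
have tMM : MM^T = MM by rewrite /MM !trmx_mul trmxK tS mulmxA.
have dMM i : MM i i = 1.
  have -> : MM i i = (col i (row i MM)) 0 0 by rewrite !mxE.
  rewrite /MM !row_mul rowK colE -mulmxA -colE -tr_row rowK trmxK hq.
  by rewrite !mxE.
have hz : g *m (MM - 1%:M) *m g^T = 0.
  apply: zero_diag; first by rewrite trB tMM trmx1.
  by move=> i; rewrite mxE -/MM dMM !mxE eqxx subrr.
have hgM : g *m MM *m g^T = 1%:M.
  rewrite -hgg; apply: subr0_eq; rewrite -hz.
  by rewrite mulmxBr mulmxBl mulmx1.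
have hqy : y *m S *m y^T = 1%:M.
  by rewrite hy trmx_mul !mulmxA -hgM /MM !mulmxA.
have ea1 : a1 = A + y^T *m y by rewrite -ey addrC subrK.
set w := S *m y^T.
have aw : a1 *m w = 0.
  rewrite ea1 mulmxDl /w mulmxA mulmxV // mul1mx -mulmxA (mulmxA y) hqy mulmx1.
  exact: mx_add_self.
have w0 : w = 0 by rewrite -(mul1mx w) -(mulVmx ua1) -mulmxA aw mulmx0.
have : y^T = 0 by rewrite -(mul1mx y^T) -(mulmxV uA) -mulmxA -/S -/w w0 mulmx0.
move=> y0; move: huy; rewrite y0 mulmx0 => /matrixP /(_ 0 0).
by rewrite !mxE.
Qed.
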